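(* Let $X_1, X_2,\ldots$ be an exchangeable sequence of Bernoulli random variables, fix $k\in\mathbb N$, $e_1,\ldots,e_k\in\{0,1\}$, $\alpha=\sum_{j=1}^k e_j$, and $N\in{}^*\mathbb N\setminus\mathbb N$, and let $Y_N=\frac{X_1+\cdots+X_N}{N}$. If $\mathbb P(X_1=e_1,\ldots,X_k=e_k)=0$, then $$\sum_{i = 0}^N {}^*\mathbb{P}\left(X_1 = e_1, \ldots, X_k = e_k \,\Big\vert\, Y_N = \tfrac{i}{N}\right) {}^*\mathbb{P}\left(Y_N = \tfrac{i}{N}\right) \approx \sum_{i = 0}^N \left(\tfrac{i}{N} \right)^{\alpha} \left(1 - \tfrac{i}{N} \right)^{k - \alpha} {}^*\mathbb{P}\left(Y_N = \tfrac{i}{N}\right),$$ where a term whose conditioning event has probability zero is taken to be $0$.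
   Context: Bernoulli means $\{0,1\}$-valued; exchangeable means every finite subcollection has the same joint law as any permutation of it. Work in a sufficiently saturated nonstandard extension; ${}^*\mathbb P$ extends $\mathbb P$, $X_1,\ldots,X_N$ are the first $N$ terms of the extended sequence. $x\approx y$ means $x-y$ is infinitesimal. *)

(* Defs.v *)
From Stdlib Require Import Reals Lra Lia.
Open Scope R_scope.

Fixpoint sumR (n : nat) (f : nat -> R) : R :=
  match n with
  | O => 0
  | S m => sumR m f + f m
  end.

Definition is_prob {Omega : Type} (P : (Omega -> Prop) -> R) : Prop :=
  (forall A, 0 <= P A) /\
  P (fun _ => True) = 1 /\
  (forall A B : Omega -> Prop, (forall w, ~ (A w /\ B w)) ->
      P (fun w => A w \/ B w) = P A + P B) /\
  (forall A B : Omega -> Prop, (forall w, A w <-> B w) -> P A = P B).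

(* Conditional probability, with the convention P(A | B) = 0 when P(B) = 0. *)
Definition condP {Omega : Type} (P : (Omega -> Prop) -> R)
    (A B : Omega -> Prop) : R :=
  if Req_EM_T (P B) 0 then 0 else P (fun w => A w /\ B w) / P B.

(* X : nat -> Omega -> bool; X i is the paper's X_{i+1} ({0,1}-valued,
   true = 1). *)
Definition exchangeable {Omega : Type} (P : (Omega -> Prop) -> R)
    (X : nat -> Omega -> bool) : Prop :=
  forall (n : nat) (sigma : nat -> nat),
    (forall i, (i < n)%nat -> (sigma i < n)%nat) ->
    (forall i j, (i < n)%nat -> (j < n)%nat -> sigma i = sigma j -> i = j) ->
    forall v : nat -> bool,
      P (fun w => forall i, (i < n)%nat -> X (sigma i) w = v i) =
      P (fun w => forall i, (i < n)%nat -> X i w = v i).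

Definition b2R (b : bool) : R := if b then 1 else 0.

Definition Y {Omega : Type} (X : nat -> Omega -> bool) (n : nat) (w : Omega) : R :=
  sumR n (fun t => b2R (X t w)) / INR n.

Definition cyl {Omega : Type} (X : nat -> Omega -> bool) (k : nat)
    (e : nat -> bool) (w : Omega) : Prop :=
  forall i, (i < k)%nat -> X i w = e i.

(* the two sides of the claimed approximation, as standard functions of n;
   the internal (starred) versions are obtained by evaluating them
   componentwise in the ultrapower below (transfer). *)
Definition lhs {Omega : Type} (P : (Omega -> Prop) -> R)
    (X : nat -> Omega -> bool) (k : nat) (e : nat -> bool) (n : nat) : R :=
  sumR (S n) (fun i =>
    condP P (cyl X k e) (fun w => Y X n w = INR i / INR n) *
    P (fun w => Y X n w = INR i / INR n)).

Fixpoint alpha (k : nat) (e : nat -> bool) : nat :=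
  match k with
  | O => O
  | S m => (alpha m e + (if e m then 1 else 0))%nat
  end.

Definition rhs {Omega : Type} (P : (Omega -> Prop) -> R)
    (X : nat -> Omega -> bool) (k : nat) (e : nat -> bool) (n : nat) : R :=
  sumR (S n) (fun i =>
    (INR i / INR n) ^ alpha k e *
    (1 - INR i / INR n) ^ (k - alpha k e) *
    P (fun w => Y X n w = INR i / INR n)).

Definition ultrafilter {I : Type} (U : (I -> Prop) -> Prop) : Prop :=
  U (fun _ => True) /\
  ~ U (fun _ => False) /\
  (forall A B, U A -> U B -> U (fun j => A j /\ B j)) /\
  (forall A B : I -> Prop, (forall j, A j -> B j) -> U A -> U B) /\
  (forall A : I -> Prop, U A \/ U (fun j => ~ A j)).

Definition nonstandard_nat {I : Type} (U : (I -> Prop) -> Prop)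
    (Nseq : I -> nat) : Prop :=
  forall m : nat, ~ U (fun j => Nseq j = m).

Definition approx {I : Type} (U : (I -> Prop) -> Prop) (x y : I -> R) : Prop :=
  forall eps : R, 0 < eps -> U (fun j => Rabs (x j - y j) < eps).

(* Main.v *)
Require Import Defs.
From Stdlib Require Import Reals Lra Lia Classical.
Open Scope R_scope.

Fixpoint cnt (n : nat) (v : nat -> bool) : nat :=
  match n with O => O | S m => (cnt m v + (if v m then 1 else 0))%nat end.

Definition upd (v : nat -> bool) (m : nat) (b : bool) : nat -> bool :=
  fun j => if Nat.eqb j m then b else v j.

Definition swap (p q i : nat) : nat :=
  if Nat.eqb i p then q else if Nat.eqb i q then p else i.

Ltac eqbs := repeat (match goal with |- context [Nat.eqb ?a ?b] => destruct (Nat.eqb_spec a b) end).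

Lemma swap_invol p q x : swap p q (swap p q x) = x.
Proof. unfold swap; destruct (Nat.eqb_spec x p), (Nat.eqb_spec x q); eqbs; lia. Qed.

Lemma swap_lt p q m x : (p < m)%nat -> (q < m)%nat -> (x < m)%nat -> (swap p q x < m)%nat.
Proof. unfold swap; eqbs; lia. Qed.

Lemma cnt_ext n v u : (forall j, (j < n)%nat -> v j = u j) -> cnt n v = cnt n u.
Proof.
  induction n; simpl; intros H; auto.
  rewrite IHn by (intros; apply H; lia). rewrite H by lia. reflexivity.
Qed.

Lemma cnt_le n v : (cnt n v <= n)%nat.
Proof. induction n; simpl; auto. destruct (v n); lia. Qed.

Lemma cnt_upd m p v b : (p < m)%nat ->
  (cnt m (upd v p b) + (if v p then 1 else 0) = cnt m v + (if b then 1 else 0))%nat.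
Proof.
  induction m; intros Hp; [lia|]. simpl.
  destruct (Nat.eq_dec p m) as [->|Hne].
  - rewrite (cnt_ext m (upd v m b) v).
    2:{ intros j Hj; unfold upd; eqbs; first [reflexivity | lia]. }
    unfold upd; rewrite Nat.eqb_refl. destruct (v m), b; lia.
  - specialize (IHm ltac:(lia)).
    assert (E: upd v p b m = v m) by (unfold upd; eqbs; first [reflexivity | lia]).
    rewrite E. lia.
Qed.

Lemma cnt_swap m p q v : (p < m)%nat -> (q < m)%nat ->
  cnt m (fun i => v (swap p q i)) = cnt m v.
Proof.
  intros Hp Hq. destruct (Nat.eq_dec p q) as [->|Hne].
  - apply cnt_ext. intros j _. unfold swap; eqbs; subst; auto.
  - rewrite (cnt_ext m _ (upd (upd v p (v q)) q (v p))).
    2:{ intros j _. unfold upd, swap; eqbs; subst; auto; lia. }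
    pose proof (cnt_upd m p v (v q) Hp) as H1.
    pose proof (cnt_upd m q (upd v p (v q)) (v p) Hq) as H2.
    assert (E: upd v p (v q) q = v q) by (unfold upd; eqbs; first [reflexivity | lia]).
    rewrite E in H2. lia.
Qed.

Lemma cnt_none n v b : (forall p, (p < n)%nat -> v p <> b) -> cnt n v = if b then O else n.
Proof.
  induction n; intros H; simpl; [destruct b; auto|].
  rewrite IHn by (intros; apply H; lia).
  specialize (H n ltac:(lia)). destruct b, (v n); try congruence; lia.
Qed.

Lemma cnt_perm n : forall v u, cnt n v = cnt n u -> exists sigma : nat -> nat,
  (forall i, (i < n)%nat -> (sigma i < n)%nat) /\
  (forall i j, (i < n)%nat -> (j < n)%nat -> sigma i = sigma j -> i = j) /\
  (forall i, (i < n)%nat -> v (sigma i) = u i).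
Proof.
  induction n; intros v u H.
  - exists (fun i => i). repeat split; intros; lia.
  - assert (Hp: exists p, (p < S n)%nat /\ v p = u n).
    { destruct (classic (exists p, (p < S n)%nat /\ v p = u n)) as [Hy|Hno]; auto.
      exfalso.
      assert (H0: cnt (S n) v = if u n then O else S n).
      { apply cnt_none. intros p Hp E. apply Hno; eauto. }
      rewrite H in H0. simpl in H0. pose proof (cnt_le n u).
      destruct (u n); lia. }
    destruct Hp as [p [Hp Hvp]].
    set (v' := fun i => v (swap p n i)).
    assert (Hc: cnt (S n) v' = cnt (S n) v) by (apply cnt_swap; lia).
    assert (Hvn: v' n = u n).
    { unfold v'. rewrite <- Hvp. f_equal. unfold swap; eqbs; lia. }
    assert (Hc2: cnt n v' = cnt n u).
    { rewrite H in Hc. simpl in Hc. rewrite Hvn in Hc. lia. }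
    destruct (IHn v' u Hc2) as [s [Hs1 [Hs2 Hs3]]].
    exists (fun i => if Nat.eqb i n then p else swap p n (s i)).
    repeat split.
    + intros i Hi. destruct (Nat.eqb_spec i n); auto.
      apply swap_lt; try lia. specialize (Hs1 i ltac:(lia)). lia.
    + intros i j Hi Hj E.
      destruct (Nat.eqb_spec i n), (Nat.eqb_spec j n); try lia.
      * exfalso. assert (E2: swap p n p = swap p n (swap p n (s j))) by (f_equal; exact E).
        rewrite swap_invol in E2. specialize (Hs1 j ltac:(lia)).
        unfold swap in E2; rewrite Nat.eqb_refl in E2. lia.
      * exfalso. assert (E2: swap p n p = swap p n (swap p n (s i))) by (f_equal; symmetry; exact E).
        rewrite swap_invol in E2. specialize (Hs1 i ltac:(lia)).
        unfold swap in E2; rewrite Nat.eqb_refl in E2. lia.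
      * assert (E2: swap p n (swap p n (s i)) = swap p n (swap p n (s j))) by (f_equal; exact E).
        rewrite !swap_invol in E2. apply Hs2; auto; lia.
    + intros i Hi. destruct (Nat.eqb_spec i n) as [->|].
      * auto.
      * apply (Hs3 i ltac:(lia)).
Qed.

Lemma cnt_add k m u : cnt (k + m) u = (cnt k u + cnt m (fun j => u (k + j)%nat))%nat.
Proof. induction m; simpl; [rewrite Nat.add_0_r; lia|]. rewrite Nat.add_succ_r. simpl. rewrite IHm. lia. Qed.

Lemma cnt_lt c m : cnt m (fun j => Nat.ltb j c) = Nat.min m c.
Proof. induction m; [reflexivity|]. change (cnt m (fun j => Nat.ltb j c) + (if Nat.ltb m c then 1 else 0) = Nat.min (S m) c)%nat. rewrite IHm. destruct (Nat.ltb_spec m c); lia. Qed.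

Lemma alpha_cnt k e : alpha k e = cnt k e.
Proof. induction k; simpl; auto. Qed.

Lemma alpha_le k e : (alpha k e <= k)%nat.
Proof. rewrite alpha_cnt; apply cnt_le. Qed.

Lemma sum_b2R {Omega} (X : nat -> Omega -> bool) n w :
  sumR n (fun t => b2R (X t w)) = INR (cnt n (fun t => X t w)).
Proof.
  induction n; simpl; auto. rewrite IHn, plus_INR.
  unfold b2R; destruct (X n w); simpl; lra.
Qed.

Section Prob.
Context {Omega : Type} (P : (Omega -> Prop) -> R) (HP : is_prob P).

Lemma P_ext A B : (forall w, A w <-> B w) -> P A = P B.
Proof. destruct HP as [_ [_ [_ H]]]. apply H. Qed.

Lemma P_nonneg A : 0 <= P A.
Proof. destruct HP as [H _]. apply H. Qed.

Lemma P_add A B : (forall w, ~ (A w /\ B w)) -> P (fun w => A w \/ B w) = P A + P B.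
Proof. destruct HP as [_ [_ [H _]]]. apply H. Qed.

Lemma P_empty : P (fun _ => False) = 0.
Proof.
  pose proof (P_add (fun _ => False) (fun _ => False) ltac:(tauto)).
  rewrite (P_ext _ (fun _ => False)) in H by tauto. lra.
Qed.

Lemma P_mono A B : (forall w, A w -> B w) -> P A <= P B.
Proof.
  intros H. rewrite (P_ext B (fun w => A w \/ (B w /\ ~ A w))).
  - rewrite P_add by tauto. pose proof (P_nonneg (fun w => B w /\ ~ A w)). lra.
  - intros w; split; [|firstorder]. intros Hb. destruct (classic (A w)); tauto.
Qed.

Lemma P_le1 A : P A <= 1.
Proof. destruct HP as [_ [H1 _]]. rewrite <- H1. apply P_mono. auto. Qed.

Lemma P_zero_sub A B : (forall w, A w -> B w) -> P B = 0 -> P A = 0.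
Proof. intros H HB. pose proof (P_mono A B H). pose proof (P_nonneg A). lra. Qed.

Lemma part_zero (X : nat -> Omega -> bool) n B :
  (forall v, P (fun w => B w /\ forall j, (j < n)%nat -> X j w = v j) = 0) -> P B = 0.
Proof.
  intros H.
  assert (G: forall d m v, (m + d = n)%nat ->
    P (fun w => B w /\ forall j, (j < m)%nat -> X j w = v j) = 0).
  { induction d; intros m v Hm.
    - replace m with n by lia. apply H.
    - rewrite (P_ext _ (fun w =>
        (B w /\ forall j, (j < S m)%nat -> X j w = upd v m true j) \/
        (B w /\ forall j, (j < S m)%nat -> X j w = upd v m false j))).
      + rewrite P_add.
        * rewrite !IHd by lia. lra.
        * intros w [[_ H1] [_ H2]]. specialize (H1 m ltac:(lia)).
          specialize (H2 m ltac:(lia)). unfold upd in *. rewrite Nat.eqb_refl in *. congruence.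
      + intros w; split.
        * intros [Hb Hj]. destruct (X m w) eqn:Hx; [left|right]; split; auto;
            intros j Hj'; unfold upd; destruct (Nat.eqb_spec j m); subst; auto; apply Hj; lia.
        * intros [[Hb Hj]|[Hb Hj]]; split; auto; intros j Hj'.
          -- specialize (Hj j ltac:(lia)). unfold upd in Hj. destruct (Nat.eqb_spec j m); [lia|auto].
          -- specialize (Hj j ltac:(lia)). unfold upd in Hj. destruct (Nat.eqb_spec j m); [lia|auto]. }
  rewrite (P_ext B (fun w => B w /\ forall j, (j < 0)%nat -> X j w = (fun _ => true) j)).
  - apply (G n 0%nat); lia.
  - intros w; split; [|tauto]. intros; split; auto; intros; lia.
Qed.

Lemma sum_disj (E : nat -> Omega -> Prop) :
  (forall i j w, i <> j -> E i w -> E j w -> False) ->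
  forall m, sumR m (fun i => P (E i)) = P (fun w => exists i, (i < m)%nat /\ E i w).
Proof.
  intros Hd m. induction m; simpl.
  - rewrite (P_ext _ (fun _ => False)); [rewrite P_empty; auto|].
    intros w; split; [intros [i [Hi _]]; lia|tauto].
  - rewrite IHm. rewrite <- P_add.
    + apply P_ext. intros w; split.
      * intros [[i [Hi Ei]]|Em]; exists i || exists m; split; auto; lia.
      * intros [i [Hi Ei]]. destruct (Nat.eq_dec i m); subst; auto. left; exists i; split; auto; lia.
    + intros w [[i [Hi Ei]] Em]. apply (Hd i m w); auto; lia.
Qed.
End Prob.

Lemma sumR_le n f g : (forall i, (i < n)%nat -> f i <= g i) -> sumR n f <= sumR n g.
Proof. induction n; simpl; intros; [lra|]. pose proof (H n ltac:(lia)). pose proof (IHn ltac:(intros; apply H; lia)). lra. Qed.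

Lemma sumR_scal n c f : sumR n (fun i => c * f i) = c * sumR n f.
Proof. induction n; simpl; [lra|]. rewrite IHn; lra. Qed.

Lemma sumR_zero n f : (forall i, (i < n)%nat -> f i = 0) -> sumR n f = 0.
Proof. induction n; simpl; intros; [lra|]. rewrite IHn, H by (try intros; try apply H; lia). lra. Qed.

Lemma pow_le1 a m : 0 <= a <= 1 -> a ^ m <= 1.
Proof.
  intros [H0 H1]; induction m; simpl; [lra|].
  pose proof (pow_le a m H0). nra.
Qed.

Lemma pow_le_self a m : 0 <= a <= 1 -> (1 <= m)%nat -> a ^ m <= a.
Proof.
  intros Ha Hm. destruct m; [lia|]. simpl. pose proof (pow_le1 a m Ha).
  pose proof (pow_le a m (proj1 Ha)). nra.
Qed.

Lemma Y_eq {Omega} (X : nat -> Omega -> bool) n w :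
  Y X n w = INR (cnt n (fun t => X t w)) / INR n.
Proof. unfold Y. rewrite sum_b2R. auto. Qed.

Lemma div_inj a b c : c <> 0 -> a / c = b / c -> a = b.
Proof.
  intros Hc H. unfold Rdiv in H. apply Rmult_eq_reg_r in H; auto.
  apply Rinv_neq_0_compat; auto.
Qed.

Lemma lhs_zero {Omega} (P : (Omega -> Prop) -> R) (HP : is_prob P) X k e n :
  P (cyl X k e) = 0 -> lhs P X k e n = 0.
Proof.
  intros H0. unfold lhs. apply sumR_zero. intros i _. unfold condP.
  destruct (Req_EM_T _ _) as [E|E]; [lra|].
  rewrite (P_zero_sub P HP _ (cyl X k e)); auto; [unfold Rdiv; lra|]. tauto.
Qed.

Lemma good_zero {Omega} (P : (Omega -> Prop) -> R) (HP : is_prob P) X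
  (Hex : exchangeable P X) k e n i :
  P (cyl X k e) = 0 -> (1 <= n)%nat -> (i <= n)%nat -> (alpha k e <= i)%nat ->
  (k - alpha k e <= n - i)%nat ->
  P (fun w => Y X n w = INR i / INR n) = 0.
Proof.
  intros H0 Hn Hi Ha Hb.
  assert (Hk: (k <= n)%nat) by lia.
  assert (Hn0: INR n <> 0) by (apply not_0_INR; lia).
  apply (part_zero P HP X n). intros v.
  destruct (Nat.eq_dec (cnt n v) i) as [Hc|Hc].
  - set (u := fun j => if Nat.ltb j k then e j else Nat.ltb (j - k) (i - alpha k e)).
    assert (Hu: cnt n u = i).
    { replace n with (k + (n - k))%nat by lia. rewrite cnt_add.
      rewrite (cnt_ext k u e) by (intros j Hj; unfold u; destruct (Nat.ltb_spec j k); [reflexivity|lia]).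
      rewrite (cnt_ext (n - k) _ (fun j => Nat.ltb j (i - alpha k e))).
      2:{ intros j Hj. unfold u. destruct (Nat.ltb_spec (k + j) k); [lia|]. f_equal; lia. }
      rewrite cnt_lt, <- alpha_cnt. lia. }
    rewrite <- Hu in Hc.
    destruct (cnt_perm n v u Hc) as [s [Hs1 [Hs2 Hs3]]].
    apply (P_zero_sub P HP _ (fun w => forall i, (i < n)%nat -> X (s i) w = u i)).
    { intros w [_ Hw] j Hj. rewrite Hw by auto. auto. }
    rewrite (Hex n s Hs1 Hs2 u).
    apply (P_zero_sub P HP _ (cyl X k e)); auto.
    intros w Hw r Hr. rewrite Hw by lia. unfold u. destruct (Nat.ltb_spec r k); [reflexivity|lia].
  - apply (P_zero_sub P HP _ (fun _ => False)); [|apply P_empty; auto].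
    intros w [Hy Hw]. apply Hc. rewrite Y_eq in Hy.
    rewrite (cnt_ext n _ v Hw) in Hy. apply INR_eq. apply (div_inj _ _ _ Hn0 Hy).
Qed.

Lemma f_bound k a n i : (1 <= n)%nat -> (i <= n)%nat -> (a <= k)%nat ->
  ~ ((a <= i)%nat /\ (k - a <= n - i)%nat) ->
  (INR i / INR n) ^ a * (1 - INR i / INR n) ^ (k - a) <= INR k / INR n.
Proof.
  intros Hn Hi Hak Hg.
  assert (Hnp: 0 < INR n) by (apply lt_0_INR; lia).
  assert (Hy: 0 <= INR i / INR n <= 1).
  { split. apply Rmult_le_pos; [apply pos_INR|left; apply Rinv_0_lt_compat; auto].
    apply (Rmult_le_reg_r (INR n)); auto. unfold Rdiv. rewrite Rmult_assoc, Rinv_l by lra.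
    rewrite Rmult_1_r, Rmult_1_l. apply le_INR; auto. }
  assert (H1y: 0 <= 1 - INR i / INR n <= 1) by lra.
  pose proof (pow_le _ a (proj1 Hy)). pose proof (pow_le _ (k - a) (proj1 H1y)).
  pose proof (pow_le1 _ a Hy). pose proof (pow_le1 _ (k - a) H1y).
  assert (Hdiv: forall m, (m <= k)%nat -> INR m / INR n <= INR k / INR n).
  { intros m Hm. unfold Rdiv. apply Rmult_le_compat_r; [left; apply Rinv_0_lt_compat; auto|].
    apply le_INR; auto. }
  destruct (Nat.le_gt_cases a i) as [Hai|Hai].
  - assert (Hb: (n - i < k - a)%nat) by lia.
    pose proof (pow_le_self _ (k - a) H1y ltac:(lia)).
    assert (E: 1 - INR i / INR n = INR (n - i) / INR n).
    { rewrite minus_INR by auto. field. lra. }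
    pose proof (Hdiv (n - i)%nat ltac:(lia)). nra.
  - pose proof (pow_le_self _ a Hy ltac:(lia)).
    pose proof (Hdiv i ltac:(lia)). nra.
Qed.

Lemma rhs_bound {Omega} (P : (Omega -> Prop) -> R) (HP : is_prob P) X
  (Hex : exchangeable P X) k e n :
  P (cyl X k e) = 0 -> (1 <= n)%nat -> 0 <= rhs P X k e n <= INR k / INR n.
Proof.
  intros H0 Hn.
  assert (Hnp: 0 < INR n) by (apply lt_0_INR; lia).
  assert (Hkn: 0 <= INR k / INR n) by (apply Rmult_le_pos; [apply pos_INR|left; apply Rinv_0_lt_compat; auto]).
  set (E := fun i w => Y X n w = INR i / INR n).
  assert (Hy: forall i, (i < S n)%nat -> 0 <= INR i / INR n <= 1).
  { intros i Hi. split. apply Rmult_le_pos; [apply pos_INR|left; apply Rinv_0_lt_compat; auto].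
    apply (Rmult_le_reg_r (INR n)); auto. unfold Rdiv. rewrite Rmult_assoc, Rinv_l by lra.
    rewrite Rmult_1_r, Rmult_1_l. apply le_INR; lia. }
  split.
  - unfold rhs. replace 0 with (sumR (S n) (fun _ => 0)) by (apply sumR_zero; auto).
    apply sumR_le. intros i Hi. specialize (Hy i Hi).
    apply Rmult_le_pos; [|apply (P_nonneg P HP)].
    apply Rmult_le_pos; apply pow_le; lra.
  - apply Rle_trans with (sumR (S n) (fun i => INR k / INR n * P (E i))).
    + apply sumR_le. intros i Hi. unfold E.
      destruct (classic ((alpha k e <= i)%nat /\ (k - alpha k e <= n - i)%nat)) as [[Ha Hb]|Hg].
      * rewrite (good_zero P HP X Hex k e n i) by (auto; lia). lra.
      * apply Rmult_le_compat_r; [apply (P_nonneg P HP)|].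
        apply f_bound; auto; try lia. apply alpha_le.
    + rewrite sumR_scal. rewrite (sum_disj P HP E).
      * pose proof (P_le1 P HP (fun w => exists i, (i < S n)%nat /\ E i w)). nra.
      * intros i j w Hij Ei Ej. unfold E in *. rewrite Ei in Ej. apply Hij, INR_eq.
        apply (div_inj _ _ (INR n)); auto; lra.
Qed.

Theorem mainTheorem6
  (Omega : Type) (P : (Omega -> Prop) -> R) (X : nat -> Omega -> bool)
  (HP : is_prob P) (Hex : exchangeable P X)
  (k : nat) (e : nat -> bool)
  (I : Type) (U : (I -> Prop) -> Prop) (HU : ultrafilter U)
  (Nseq : I -> nat) (HN : nonstandard_nat U Nseq)
  (H0 : P (cyl X k e) = 0) :
  approx U (fun j => lhs P X k e (Nseq j)) (fun j => rhs P X k e (Nseq j)).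
Proof.
  destruct HU as [UT [UF [UI [UM UU]]]].
  intros eps Heps.
  assert (Hk1: 0 < INR k + 1) by (pose proof (pos_INR k); lra).
  destruct (archimed_cor1 (eps / (INR k + 1))) as [M [HM HM0]].
  { apply Rdiv_lt_0_compat; auto. }
  assert (Hne: forall m, U (fun j => Nseq j <> m)).
  { intros m. destruct (UU (fun j => Nseq j = m)) as [H|H]; auto. exfalso; apply (HN m H). }
  assert (Hge: forall m, U (fun j => (m <= Nseq j)%nat)).
  { induction m.
    - apply (UM (fun _ => True)); auto. intros; lia.
    - apply (UM (fun j => (m <= Nseq j)%nat /\ Nseq j <> m)); [intros; lia|]. apply UI; auto. }
  refine (UM _ _ _ (Hge M)).
  intros j Hj. cbv beta in Hj |- *.
  assert (HMp: 0 < INR M) by (apply lt_0_INR; lia).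
  rewrite (lhs_zero P HP X k e _ H0).
  destruct (rhs_bound P HP X Hex k e (Nseq j) H0 ltac:(lia)) as [Hr1 Hr2].
  rewrite Rminus_0_l, Rabs_Ropp, Rabs_right by lra.
  assert (HMN: INR M <= INR (Nseq j)) by (apply le_INR; auto).
  assert (Hkn: INR k / INR (Nseq j) <= INR k / INR M).
  { unfold Rdiv. apply Rmult_le_compat_l; [apply pos_INR|]. apply Rinv_le_contravar; auto. }
  assert (HkM: INR k / INR M < eps).
  { apply Rlt_le_trans with ((INR k + 1) * / INR M).
    - unfold Rdiv. apply Rmult_lt_compat_r; [apply Rinv_0_lt_compat; auto|lra].
    - apply Rle_trans with ((INR k + 1) * (eps / (INR k + 1))); [apply Rmult_le_compat_l; lra|].
      right. field. lra. }
  lra.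
Qed.
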